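(* Let $X$ be a compact metric countable space and $f:X\to X$ a continuous function such that every accumulation point of $X$ is periodic. Let $p\in\mathbb N^*$ and let $b\in X$ be an isolated point. If there is a sequence $(a_n)_{n\in\mathbb N}$ in $X$ such that $f^p(a_n)\to b$, then $b$ is periodic and $\mathcal O_f(b)=\omega_f(b)=\omega_f(a_n)$ for all but finitely many $n\in\mathbb N$.
   Context: $\mathbb N^*$ denotes the set of free ultrafilters on $\mathbb N$. For $p\in\mathbb N^*$ and a sequence $(x_n)$ in $X$, $x=p\text{-}\lim_{n\to\infty}x_n$ means that for every neighborhood $V$ of $x$, $\{n\in\mathbb N: x_n\in V\}\in p$. The $p$-iterate of $f$ is $f^p(x)=p\text{-}\lim_{n\to\infty}f^n(x)$. The orbit of $x$ is $\mathcal O_f(x)=\{f^n(x):n\in\mathbb N\}$. The $\omega$-limit set $\omega_f(x)$ is the set of $y\in X$ such that $f^{n_k}(x)\to y$ for some strictly increasing sequence $(n_k)$ of naturals. A point $x$ is periodic if $f^n(x)=x$ for some $n\ge 1$. An accumulation point of $X$ is a non-isolated point. *)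

(* Defs.v *)
From HB Require Import structures.
From mathcomp Require Import all_boot all_order all_algebra.
From mathcomp Require Import all_classical all_reals all_analysis.
Set Implicit Arguments. Unset Strict Implicit. Unset Printing Implicit Defensive.
Import Order.TTheory GRing.Theory Num.Theory.
Local Open Scope classical_set_scope.

Definition free_ultrafilter (p : set_system nat) : Prop :=
  UltraFilter p /\ (forall A : set nat, finite_set A -> ~ p A).

Definition is_plim {X : topologicalType} (p : set_system nat) (u : nat -> X) (x : X) : Prop :=
  forall V : set X, nbhs x V -> p [set n | V (u n)].

Definition isolated_point {X : topologicalType} (x : X) : Prop := nbhs x [set x].
Definition accumulation_point {X : topologicalType} (x : X) : Prop := ~ isolated_point x.

Definition periodic_point {X : Type} (f : X -> X) (x : X) : Prop :=
  exists n : nat, (0 < n)%N /\ iter n f x = x.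

Definition orbit_set {X : Type} (f : X -> X) (x : X) : set X :=
  [set y | exists n : nat, y = iter n f x].

Definition omega_limit {X : topologicalType} (f : X -> X) (x : X) : set X :=
  [set y | exists nk : nat -> nat, {homo nk : i j / (i < j)%N} /\
            ((fun k => iter (nk k) f x) @ \oo --> y)].

(* Main.v *)
Require Import Defs.
From HB Require Import structures.
From mathcomp Require Import all_boot all_order all_algebra.
From mathcomp Require Import all_classical all_reals all_analysis.
Local Open Scope classical_set_scope.

Section Aux.
Variables (R : realType) (X : metricType R) (f : X -> X).

Lemma iter_mul_per (b : X) m q : iter m f b = b -> iter (m * q) f b = b.
Proof.
move=> hm; elim: q => [|q IH]; first by rewrite muln0.
by rewrite mulnS iterD IH hm.
Qed.

Lemma iter_mod (b : X) m n : iter m f b = b -> iter n f b = iter (n %% m) f b.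
Proof.
move=> hm; by rewrite {1}(divn_eq n m) addnC iterD mulnC iter_mul_per.
Qed.

Lemma orbit_closed (b : X) {m} : (0 < m)%N -> iter m f b = b -> closed (orbit_set f b).
Proof.
move=> m0 hm.
have acc : accessible_space X by exact/hausdorff_accessible/metric_hausdorff.
apply: (accessible_finite_set_closed.1 acc).
apply: (@sub_finite_set _ _ ((fun i => iter i f b) @` `I_m)); last first.
  exact/finite_image/finite_II.
move=> y [n ->]; exists (n %% m); first by rewrite /= ltn_mod.
by rewrite -iter_mod.
Qed.

Lemma omega_orbit {x b : X} {K m} : (0 < m)%N -> iter K f x = b -> iter m f b = b ->
  omega_limit f x = orbit_set f b.
Proof.
move=> m0 hK hm; apply/seteqP; split => y.
- move=> [nk [inc cv]].
  have ge : forall k, (k <= nk k)%N.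
    elim=> [//|k IH]; exact: leq_ltn_trans IH (inc _ _ (ltnSn k)).
  have nr : \forall k \near \oo, orbit_set f b (iter (nk k) f x).
    exists K => // k /= hk.
    exists (nk k - K); rewrite -hK -iterD subnK //.
    exact: leq_trans hk (ge k).
  have := @closed_cvg nat X \oo _ (fun k => iter (nk k) f x) (orbit_set f b) (orbit_closed b m0 hm) nr y.
  exact.
- move=> [i ->].
  exists (fun k => K + i + m * k)%N; split.
    by move=> u v uv; rewrite ltn_add2l ltn_pmul2l.
  have E : (fun k => iter (K + i + m * k) f x) = fun _ => iter i f b.
    apply: funext => k.
    by rewrite -addnA addnC iterD hK iterD iter_mul_per.
  rewrite E; exact: cvg_cst.
Qed.

End Aux.
Arguments omega_orbit {R X f x b K m}.

Theorem lemma3p4 (R : realType) (X : metricType R) (f : X -> X)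
  (Xcompact : compact [set: X]) (Xcountable : countable [set: X])
  (fcont : continuous f)
  (acc_periodic : forall x : X, accumulation_point x -> periodic_point f x)
  (p : set_system nat) (pfree : free_ultrafilter p)
  (b : X) (b_isolated : isolated_point b)
  (a : nat -> X) (fpa : nat -> X)
  (fpa_def : forall n, is_plim p (fun k => iter k f (a n)) (fpa n))
  (fpa_cvg : fpa @ \oo --> b) :
  periodic_point f b /\
  exists N : nat, forall n : nat, (N <= n)%N ->
    orbit_set f b = omega_limit f b /\ omega_limit f b = omega_limit f (a n).
Proof.
have [N _ HN] := fpa_cvg _ b_isolated.
have key : forall n, (N <= n)%N -> exists K m, (0 < m)%N /\ iter K f (a n) = b /\ iter m f b = b.
  move=> n Nn.
  have fb : fpa n = b by exact: (HN n Nn).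
  have pA := fpa_def n [set b]; rewrite fb in pA; have {pA} pA := pA b_isolated.
  set A := [set k | [set b] (iter k f (a n))] in pA.
  have [k1 Ak1] : exists k1, A k1.
    apply: contrapT => H; apply: (pfree.2 A) => //.
    suff -> : A = set0 by exact: finite_set0.
    by apply/seteqP; split => // k Ak; apply: H; exists k.
  have [k2 [Ak2 lt12]] : exists k2, A k2 /\ (k1 < k2)%N.
    apply: contrapT => H; apply: (pfree.2 A) => //.
    apply: (@sub_finite_set _ _ `I_k1.+1); last exact: finite_II.
    move=> k Ak; rewrite /= ltnS; apply: contrapT => /negP; rewrite -ltnNge => lt.
    by apply: H; exists k.
  exists k1, (k2 - k1)%N; split; first by rewrite subn_gt0.
  split; first exact: Ak1.
  by rewrite -Ak1 -iterD subnK ?Ak2 // ltnW.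
have [K [m [m0 [hK hm]]]] := key N (leqnn N).
split; first by exists m.
exists N => n Nn; have [K' [m' [m0' [hK' hm']]]] := key n Nn.
have e1 : omega_limit f b = orbit_set f b := omega_orbit (K := 0) m0 erefl hm.
have e2 : omega_limit f (a n) = orbit_set f b := omega_orbit m0' hK' hm'.
by rewrite e1 e2.
Qed.
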